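(* Let $\lambda\in\mathbb{C}$ be an algebraic number with $|\lambda|=1$ that is not a root of unity, and define $u_n=\frac n2\lambda^n+\frac n2\overline{\lambda}^n+(1-n)$. Then for every $p\in\mathbb{N}$ there exists $n\in\mathbb{N}$ such that $u_n,u_{n+1},\dots,u_{n+p-1}$ are all $\le 0$. Consequently (together with the fact that $u_n>0$ infinitely often) the sign description of $\langle u_n\rangle$ is not almost periodic.
   Context: $\overline{\lambda}$ is the complex conjugate. The sign description of a real sequence is $\sigma_n=\mathrm{sgn}(u_n)\in\{-,0,+\}$. An infinite word $\alpha$ is almost periodic if for every finite word $w$ there is $p$ such that either $w$ does not occur in $\alpha$ after position $p$, or $w$ occurs in every factor $\alpha_n\cdots\alpha_{n+p}$. *)

(* Defs.v *)
From HB Require Import structures.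
From mathcomp Require Import all_boot all_order all_algebra all_field.
Set Implicit Arguments. Unset Strict Implicit. Unset Printing Implicit Defensive.
Import Order.TTheory GRing.Theory Num.Theory.
Local Open Scope ring_scope.

Inductive sign := SNeg | SZero | SPos.

Definition sgnC (x : algC) : sign :=
  if x < 0 then SNeg else if x == 0 then SZero else SPos.

Definition sign_description (u : nat -> algC) : nat -> sign :=
  fun n => sgnC (u n).

Definition occurs_at {A : Type} (a : nat -> A) (w : seq A) (m : nat) : Prop :=
  forall i (Hi : (i < size w)%N), exists x0 : A, a (m + i)%N = nth x0 w i.

Definition almost_periodic {A : Type} (a : nat -> A) : Prop :=
  forall w : seq A, exists p : nat,
    (forall m, (p <= m)%N -> ~ occurs_at a w m) \/
    (forall n, exists m, (n <= m)%N /\ (m + size w <= n + p + 1)%N /\ occurs_at a w m).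

Definition useq (lam : algC) (n : nat) : algC :=
  (n%:R / 2) * lam ^+ n + (n%:R / 2) * (lam^* ) ^+ n + (1 - n%:R).

(* Main.v *)
Require Import Defs.
From HB Require Import structures.
From mathcomp Require Import all_boot all_order all_algebra all_field.
From mathcomp Require Import ring lra zify.
From Stdlib Require Import Classical.
Import Order.TTheory GRing.Theory Num.Theory.
Local Open Scope ring_scope.

Definition nrm (z : algC) : algR := in_algR (normr_real z).
Definition re (z : algC) : algR := in_algR (Creal_Re z).
Definition im (z : algC) : algR := in_algR (Creal_Im z).

Lemma lerR (x y : algR) : (x <= y) = (algRval x <= algRval y).
Proof. by []. Qed.
Lemma ltrR (x y : algR) : (x < y) = (algRval x < algRval y).
Proof. by []. Qed.

Lemma nrm_ge0 z : 0 <= nrm z.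
Proof. by rewrite lerR rmorph0 /=. Qed.

Lemma nrmM z w : nrm (z * w) = nrm z * nrm w.
Proof. by apply: val_inj; rewrite rmorphM /= normrM. Qed.

Lemma nrmX z n : nrm (z ^+ n) = nrm z ^+ n.
Proof. by apply: val_inj; rewrite rmorphXn /= normrX. Qed.

Lemma nrmD z w : nrm (z + w) <= nrm z + nrm w.
Proof. by rewrite lerR rmorphD /=; exact: ler_normD. Qed.

Lemma nrmN z : nrm (- z) = nrm z.
Proof. by apply: val_inj; rewrite /= normrN. Qed.

Lemma nrm1 : nrm 1 = 1.
Proof. by apply: val_inj; rewrite rmorph1 /= normr1. Qed.

Lemma nrm0P z : (nrm z == 0) = (z == 0).
Proof. by rewrite -(inj_eq val_inj) rmorph0 /= normr_eq0. Qed.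

Lemma nrm2 z : nrm z ^+ 2 = re z ^+ 2 + im z ^+ 2.
Proof. by apply: val_inj; rewrite rmorphD !rmorphXn /= normC2_Re_Im. Qed.

Lemma reB z w : re (z - w) = re z - re w.
Proof. by apply: val_inj; rewrite rmorphB /= raddfB. Qed.
Lemma imB z w : im (z - w) = im z - im w.
Proof. by apply: val_inj; rewrite rmorphB /= raddfB. Qed.
Lemma reN z : re (- z) = - re z.
Proof. by apply: val_inj; rewrite rmorphN /= raddfN. Qed.
Lemma imN z : im (- z) = - im z.
Proof. by apply: val_inj; rewrite rmorphN /= raddfN. Qed.
Lemma reI z : re ('i * z) = - im z.
Proof. by apply: val_inj; rewrite rmorphN /= ReMil. Qed.
Lemma imI z : im ('i * z) = re z.
Proof. by apply: val_inj; rewrite /= ImMil. Qed.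

Lemma useqE l m : `|l| = 1 ->
  useq l m = algRval (1 - m%:R / 2 * nrm (1 - l ^+ m) ^+ 2).
Proof.
move=> hl.
rewrite rmorphB rmorph1 !rmorphM fmorphV !rmorph_nat /= -expr2.
rewrite normCK rmorphB rmorph1 /= rmorphXn /useq.
have h : l ^+ m * (l^* ) ^+ m = 1.
  by rewrite -exprMn -normCK hl !expr1n.
have -> : (1 - l ^+ m) * (1 - (l^* ) ^+ m) = 2 - l ^+ m - (l^* ) ^+ m.
  by rewrite mulrBl !mulrBr h; ring.
by field.
Qed.

Lemma nrm_unit l : `|l| = 1 -> nrm l = 1.
Proof. by move=> hl; apply: val_inj; rewrite rmorph1 /= hl. Qed.

Lemma nrm_le2 l m : `|l| = 1 -> nrm (1 - l ^+ m) <= 2.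
Proof.
move=> hl; apply: le_trans (nrmD _ _) _.
by rewrite nrmN nrmX (@nrm_unit l hl) expr1n nrm1.
Qed.

Lemma nrm_pos l m : (forall k : nat, (0 < k)%N -> l ^+ k != 1) -> (0 < m)%N ->
  0 < nrm (1 - l ^+ m).
Proof.
move=> hr hm; rewrite lt_def nrm_ge0 andbT nrm0P subr_eq0 eq_sym.
exact: hr.
Qed.

Fixpoint dd (l : algC) (k : nat) : algR :=
  if k is k'.+1 then dd l k' * (nrm (1 - l ^+ k) / 2) else 1.

Lemma dd_prop l k : `|l| = 1 -> (forall k : nat, (0 < k)%N -> l ^+ k != 1) ->
  [/\ 0 < dd l k, dd l k <= 1 &
      forall j, (0 < j <= k)%N -> dd l k <= nrm (1 - l ^+ j) / 2].
Proof.
move=> hl hr; elim: k => [|k [h0 h1 h2]] /=.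
  by split => // -[].
have f0 : 0 < nrm (1 - l ^+ k.+1) / 2 by rewrite divr_gt0 // nrm_pos.
have f1 : nrm (1 - l ^+ k.+1) / 2 <= 1.
  by rewrite ler_pdivrMr // mul1r nrm_le2.
split; first by rewrite mulr_gt0.
- nra.
move=> j /andP[j0]; rewrite leq_eqVlt => /orP[/eqP ->|jk]; first nra.
have := h2 j; rewrite j0 -ltnS jk => /(_ isT) hj; nra.
Qed.

Lemma sep l a b : `|l| = 1 -> (a <= b)%N ->
  nrm (1 - l ^+ (b - a)) <= nrm (1 - l ^+ a) + nrm (1 - l ^+ b).
Proof.
move=> hl hab.
have e : l ^+ a - l ^+ b = l ^+ a * (1 - l ^+ (b - a)).
  by rewrite mulrBr mulr1 -exprD subnKC.
have : nrm (l ^+ a - l ^+ b) = nrm (1 - l ^+ (b - a)).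
  by rewrite e nrmM nrmX (@nrm_unit l hl) expr1n mul1r.
move=> <-.
have -> : l ^+ a - l ^+ b = - (1 - l ^+ a) + (1 - l ^+ b) by ring.
by apply: le_trans (nrmD _ _) _; rewrite nrmN.
Qed.

Lemma useq_le0 l m (d : algR) : `|l| = 1 -> 0 <= d -> d <= nrm (1 - l ^+ m) ->
  2 <= m%:R * d ^+ 2 -> useq l m <= 0.
Proof.
move=> hl d0 dn hm.
have -> : (0 : algC) = algRval 0 by rewrite rmorph0.
rewrite useqE // -lerR.
set n := nrm _ in dn *.
have n2 : d ^+ 2 <= n ^+ 2 by rewrite lerXn2r // nnegrE (le_trans d0 dn).
have m0 : (0 : algR) <= m%:R by [].
have : m%:R * d ^+ 2 <= m%:R * n ^+ 2 by rewrite ler_wpM2l.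
move=> h; lra.
Qed.

Lemma useq_gt0 l m : `|l| = 1 ->
  m%:R * nrm (1 - l ^+ m) ^+ 2 < 2 -> 0 < useq l m.
Proof.
move=> hl hm.
have -> : (0 : algC) = algRval 0 by rewrite rmorph0.
rewrite useqE // -ltrR; lra.
Qed.

Lemma part1 l : `|l| = 1 -> (forall k : nat, (0 < k)%N -> l ^+ k != 1) ->
  forall p : nat, exists n : nat, forall i : nat, (i < p)%N -> useq l (n + i) <= 0.
Proof.
move=> hl hr p.
have [d0 d1 dle] := @dd_prop l (p + p)%N hl hr.
set d := dd l (p + p)%N in d0 d1 dle.
have dd0 : 0 < d ^+ 2 by rewrite exprn_gt0.
have [N hN] : exists N : nat, 2 < N%:R * d ^+ 2.
  exists (Num.bound (2 / d ^+ 2)).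
  by rewrite -ltr_pdivrMr // archi_boundP // divr_ge0 // ltW.
have key : forall m, (N <= m)%N -> d <= nrm (1 - l ^+ m) -> useq l m <= 0.
  move=> m hm hd; apply: (@useq_le0 l m d hl (ltW d0) hd).
  have : (N%:R : algR) <= m%:R by rewrite ler_nat.
  move=> h; apply: le_trans (ltW hN) _; by rewrite ler_wpM2r // ltW.
case E: [exists i : 'I_p, nrm (1 - l ^+ (N + i)) < d].
- case/existsP: E => i0 hi0.
  exists (N + p) => i hi; apply: key; first by rewrite -addnA leq_addr.
  rewrite leNgt; apply/negP => hc.
  have := @sep l (N + i0)%N (N + p + i)%N hl.
  have hab : (N + i0 <= N + p + i)%N by have := ltn_ord i0; lia.
  move=> /(_ hab) hs.
  have := dle (N + p + i - (N + i0))%N.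
  have hj : (0 < N + p + i - (N + i0) <= p + p)%N by have := ltn_ord i0; lia.
  move=> /(_ hj) hj2.
  move: hc hi0 hs hj2.
  set A := nrm (1 - l ^+ (N + i0)); set B := nrm (1 - l ^+ _);
  set C := nrm (1 - l ^+ (N + p + i)%N).
  have -> : B = C by [].
  clear; lra.
- exists N => i hi; apply: key; first by rewrite leq_addr.
  move/negbT: E; rewrite negb_exists => /forallP /(_ (Ordinal hi)) /=.
  by rewrite -leNgt.
Qed.

Definition top (z : algC) : bool := `|re z| <= im z.
Definition regn (z : algC) : nat :=
  if top z then 0 else if top (- z) then 1 else if top ('i * z) then 2 else 3.
Definition rotc (n : nat) : algC :=
  match n with 0 => 1 | 1 => -1 | 2 => 'i | _ => - 'i end.

Lemma regn_lt z : (regn z < 4)%N.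
Proof. by rewrite /regn; do 3 case: ifP => //. Qed.

Lemma rot_top z : top (rotc (regn z) * z).
Proof.
rewrite /regn; case: ifP => [h|h1]; first by rewrite /= mul1r.
case: ifP => [h|h2]; first by rewrite /= mulN1r.
case: ifP => [h|h3] //=.
rewrite mulNr; move: h1 h2 h3; rewrite /top !(reN, imN, reI, imI) ?opprK !normrN.
set x := re z; set y := im z.
move=> /negbT h1 /negbT h2 /negbT h3; move: h1 h2 h3; rewrite -!ltNge.
case: (lerP 0 x) => hx; [rewrite (ger0_norm hx) | rewrite (ltr0_norm hx)];
case: (lerP 0 y) => hy; [rewrite (ger0_norm hy) | rewrite (ltr0_norm hy) |
  rewrite (ger0_norm hy) | rewrite (ltr0_norm hy)]; lra.
Qed.

Lemma nrm_rot n : nrm (rotc n) = 1.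
Proof.
have hi : nrm 'i = 1 by apply: val_inj; rewrite rmorph1 /= normCi.
by case: n => [|[|[|n]]] /=; rewrite ?nrmN ?hi ?nrm1.
Qed.

Lemma top_geom w1 w2 : nrm w1 = 1 -> nrm w2 = 1 -> top w1 -> top w2 ->
  (im w1 - im w2) ^+ 2 <= (re w1 - re w2) ^+ 2.
Proof.
move=> n1 n2; rewrite /top !ler_norml => /andP[a1 b1] /andP[a2 b2].
have e1 := nrm2 w1; have e2 := nrm2 w2; rewrite n1 in e1; rewrite n2 in e2.
set x1 := re w1 in e1 a1 b1 *; set y1 := im w1 in e1 a1 b1 *.
set x2 := re w2 in e2 a2 b2 *; set y2 := im w2 in e2 a2 b2 *.
have h : (y1 - y2) * (y1 + y2) = (x2 - x1) * (x2 + x1) by nra.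
have s0 : 0 <= y1 + y2 by lra.
case: (lerP (y1 + y2) 0) => hs.
  have -> : y1 = 0 by lra.
  have -> : y2 = 0 by lra.
  by rewrite subrr expr0n /= sqr_ge0.
have hx : (x2 + x1) ^+ 2 <= (y1 + y2) ^+ 2.
  have u1 : 0 <= y1 + y2 - (x2 + x1) by lra.
  have u2 : 0 <= y1 + y2 + (x2 + x1) by lra.
  have := mulr_ge0 u1 u2; nra.
rewrite -(@ler_pM2r _ ((y1 + y2) ^+ 2)) ?exprn_gt0 //.
rewrite -exprMn h exprMn -[(x1 - x2) ^+ 2]sqrrN opprB.
by rewrite ler_wpM2l ?sqr_ge0.
Qed.

Definition bucket (K : nat) (w : algC) : nat := Num.truncn ((re w + 1) * K%:R / 2).

Lemma re_bound w : nrm w = 1 -> top w -> -1 <= re w <= 1.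
Proof.
move=> n1; rewrite /top ler_norml => /andP[a b].
have e := nrm2 w; rewrite n1 in e; apply/andP; split; nra.
Qed.

Lemma bucket_le K w : nrm w = 1 -> top w -> (bucket K w <= K)%N.
Proof.
move=> n1 t; have /andP[a b] := @re_bound w n1 t.
rewrite /bucket Num.Theory.truncn_le_nat.
have k0 : (0 : algR) <= K%:R by [].
rewrite -addn1 natrD ltr_pdivrMr //; nra.
Qed.

Lemma bucket_eq K w1 w2 : nrm w1 = 1 -> top w1 -> nrm w2 = 1 -> top w2 ->
  bucket K w1 = bucket K w2 -> ((re w1 - re w2) * K%:R) ^+ 2 < 4.
Proof.
move=> n1 t1 n2 t2; rewrite /bucket.
have /andP[a1 b1] := @re_bound w1 n1 t1; have /andP[a2 b2] := @re_bound w2 n2 t2.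
have k0 : (0 : algR) <= K%:R by [].
set s1 := (re w1 + 1) * K%:R / 2; set s2 := (re w2 + 1) * K%:R / 2.
have s10 : 0 <= s1 by rewrite /s1; apply: divr_ge0 => //; apply: mulr_ge0 => //; lra.
have s20 : 0 <= s2 by rewrite /s2; apply: divr_ge0 => //; apply: mulr_ge0 => //; lra.
have /andP[c1 d1] := Num.Theory.truncn_itv s10.
have /andP[c2 d2] := Num.Theory.truncn_itv s20.
move=> e; rewrite e in c1 d1; move: c1 d1 c2 d2.
rewrite -!natr1; set t := (Num.truncn s2)%:R => c1 d1 c2 d2.
have hd : (re w1 - re w2) * K%:R = 2 * (s1 - s2) by rewrite /s1 /s2; field.
rewrite hd; nra.
Qed.

Lemma shiftn l a b : `|l| = 1 -> (a <= b)%N ->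
  nrm (l ^+ a - l ^+ b) = nrm (1 - l ^+ (b - a)).
Proof.
move=> hl hab.
have e : l ^+ a - l ^+ b = l ^+ a * (1 - l ^+ (b - a)).
  by rewrite mulrBr mulr1 -exprD subnKC.
by rewrite e nrmM nrmX (@nrm_unit l hl) expr1n mul1r.
Qed.

Lemma dirichlet l K : `|l| = 1 -> (0 < K)%N -> exists a b : nat,
  (a < b <= 4 * K + 4)%N /\ nrm (1 - l ^+ (b - a)) ^+ 2 * K%:R ^+ 2 <= 8.
Proof.
move=> hl K0.
pose f := fun i : 'I_(4 * K + 5) =>
  ((inord (regn (l ^+ i)) : 'I_4),
   (inord (bucket K (rotc (regn (l ^+ i)) * l ^+ i)) : 'I_K.+1)).
have ninj : ~ injective f.
  by move=> inj; have := leq_card f inj; rewrite card_prod !card_ord; lia.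
have key : forall i j : 'I_(4 * K + 5), f i = f j -> (i < j)%N ->
   exists a b : nat,
  (a < b <= 4 * K + 4)%N /\ nrm (1 - l ^+ (b - a)) ^+ 2 * K%:R ^+ 2 <= 8.
  move=> i j e ij; exists i, j; split.
    by rewrite ij /= -ltnS -(addn1 (4 * K + 4)) -addnA.
  set x := l ^+ i; set y := l ^+ j.
  have er : regn x = regn y.
    have := congr1 (fun p => val p.1) e => /=.
    by rewrite !inordK ?regn_lt.
  set r := regn x in er.
  set w1 := rotc r * x; set w2 := rotc r * y.
  have nx : forall k, nrm (rotc r * l ^+ k) = 1.
    by move=> k; rewrite nrmM nrm_rot nrmX (@nrm_unit l hl) expr1n mul1r.
  have n1 : nrm w1 = 1 by apply: nx.
  have n2 : nrm w2 = 1 by apply: nx.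
  have t1 : top w1 by apply: rot_top.
  have t2 : top w2 by rewrite /w2 er; apply: rot_top.
  have eb : bucket K w1 = bucket K w2.
    have := congr1 (fun p => val p.2) e => /=; rewrite -/x -/y -/r -er -/r.
    rewrite !inordK //; rewrite ltnS; exact: bucket_le.
  have hb := @bucket_eq K w1 w2 n1 t1 n2 t2 eb.
  have hg := @top_geom w1 w2 n1 n2 t1 t2.
  have hn : nrm (w1 - w2) ^+ 2 = (re w1 - re w2) ^+ 2 + (im w1 - im w2) ^+ 2.
    by rewrite nrm2 reB imB.
  have hs : nrm (w1 - w2) = nrm (1 - l ^+ (j - i)).
    rewrite /w1 /w2 -mulrBr nrmM nrm_rot mul1r shiftn //; exact: ltnW.
  rewrite -hs hn.
  move: hb hg; set a := re w1 - re w2; set b := im w1 - im w2.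
  set k := K%:R => hb hg.
  have : b ^+ 2 * k ^+ 2 <= a ^+ 2 * k ^+ 2 by rewrite ler_wpM2r ?sqr_ge0.
  rewrite exprMn in hb; nra.
have [i [j [eij nij]]] : exists i j, f i = f j /\ i <> j.
  apply: NNPP => hn; apply: ninj => i j e; apply: NNPP => ne.
  by apply: hn; exists i, j.
case: (ltngtP i j) => h.
- exact: (key i j eij h).
- exact: (key j i (esym eij) h).
- by case: nij; apply: val_inj.
Qed.

Lemma part2 l : `|l| = 1 -> (forall k : nat, (0 < k)%N -> l ^+ k != 1) ->
  forall M, exists d, (M <= d)%N /\ 0 < useq l d.
Proof.
move=> hl hr M.
have [e0 e1 ele] := @dd_prop l M hl hr.
set e := dd l M in e0 e1 ele.
have ee0 : 0 < e ^+ 2 by rewrite exprn_gt0.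
set K := (Num.bound (8 / e ^+ 2) + 17)%N.
have hK : 8 < K%:R * e ^+ 2.
  rewrite -ltr_pdivrMr //; apply: lt_le_trans (archi_boundP _) _.
    by rewrite divr_ge0 // ltW.
  by rewrite ler_nat /K leq_addr.
have K17 : (17 <= K)%N by rewrite /K leq_addl.
have K0 : (0 < K)%N by lia.
have [a [b [/andP[hab hb] hS]]] := @dirichlet l K hl K0.
exists (b - a)%N; split.
  rewrite leqNgt; apply/negP => hd.
  have := ele (b - a)%N; rewrite subn_gt0 hab ltnW //= => /(_ isT) h.
  move: hS h; set S := nrm _ => hS h.
  have S0 : 0 <= S by apply: nrm_ge0.
  have k1 : (17 : algR) <= K%:R by rewrite (ler_nat _ 17 K).
  move: hK hS h k1 ee0 S0 e0; set k := K%:R => hK hS h k1 ee0 S0 e0.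
  have h2 : e ^+ 2 <= S ^+ 2 by nra.
  have h3 : e ^+ 2 * k ^+ 2 <= S ^+ 2 * k ^+ 2 by rewrite ler_wpM2r ?sqr_ge0.
  have h4 : k * e ^+ 2 <= k ^+ 2 * e ^+2 by rewrite ler_wpM2r ?sqr_ge0 //; nra.
  clear -hK hS h3 h4; nra.
apply: useq_gt0 => //.
move: hS; set S := nrm _ => hS.
have S0 : 0 <= S by apply: nrm_ge0.
have k1 : (17 : algR) <= K%:R by rewrite (ler_nat _ 17 K).
have db : ((b - a)%N%:R : algR) <= 4 * K%:R + 4.
  have : ((b - a)%N <= 4 * K + 4)%N by lia.
  by rewrite -(ler_nat algR) natrD natrM.
move: db k1 hS; set k := K%:R; set d := (b - a)%N%:R => db k1 hS.
have d0 : 0 <= d by [].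
have S2 : 0 <= S ^+ 2 by rewrite sqr_ge0.
have h1 : d * (S ^+ 2 * k ^+ 2) <= d * 8 by rewrite ler_wpM2l.
have h2 : d * 8 <= (4 * k + 4) * 8 by nra.
have h3 : (4 * k + 4) * 8 < 2 * k ^+ 2 by nra.
have k0 : 0 < k ^+ 2 by rewrite exprn_gt0 //; lra.
rewrite -(@ltr_pM2r _ (k ^+ 2)) //; clear -h1 h2 h3 hS d0 S2; nra.
Qed.

Theorem mainTheorem11 (lam : algC)
  (Hnorm : `|lam| = 1)
  (Hnotroot : forall k : nat, (0 < k)%N -> lam ^+ k != 1) :
  (forall p : nat, exists n : nat,
      forall i : nat, (i < p)%N -> useq lam (n + i) <= 0)
  /\ ~ almost_periodic (sign_description (useq lam)).
Proof.
have p1 := @part1 lam Hnorm Hnotroot.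
split => //.
move=> ap; have [p [H1|H2]] := ap [:: SPos].
- have [d [hd hu]] := @part2 lam Hnorm Hnotroot p.
  apply: (H1 d hd) => i /=; rewrite ltnS leqn0 => /eqP ->; exists SPos.
  by rewrite addn0 /sign_description /sgnC (lt_gtF hu) (gt_eqF hu).
- have [n0 hn0] := p1 p.+1.
  have [m [hm1 [hm2 occ]]] := H2 n0.
  have [x0] := occ 0%N isT; rewrite /= addn0 /sign_description /sgnC.
  have hu : useq lam m <= 0.
    have -> : m = (n0 + (m - n0))%N by lia.
    apply: hn0; simpl in hm2; lia.
  rewrite le_eqVlt in hu; case/orP: hu => [/eqP ->|->] //.
  by rewrite ltxx eqxx.
Qed.
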